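(* Let $k\ge1$. The square Hermitian orthogonal design $\mathcal{H}_{2k-1}$ induces an irreducible representation of dimension $2^{k-1}$ of the group $\mathcal{G}_{2k-2}$.
   Context: Let $x_1,x_2,\ldots$ be formal real indeterminates. Define $\mathcal{H}_2=(x_1+x_2\sqrt{-1})$ and for $k>1$ the $2^{k-1}\times2^{k-1}$ matrix $\mathcal{H}_{2k}=\begin{pmatrix}\mathcal{H}_{2k-2} & (x_{2k-1}+x_{2k}\sqrt{-1})I_{2^{k-2}}\\ -(x_{2k-1}-x_{2k}\sqrt{-1})I_{2^{k-2}} & \mathcal{H}_{2k-2}^H\end{pmatrix}$ (conjugate transpose with $x_i$ real); $\mathcal{H}_{2k-1}$ is obtained from $\mathcal{H}_{2k}$ by setting $x_{2k}=0$. It satisfies $\mathcal{H}_{2k-1}^H\mathcal{H}_{2k-1}=(x_1^2+\cdots+x_{2k-1}^2)I$. For $m\ge0$, $\mathcal{G}_m$ is the group of order $2^{m+1}$ generated by $g_1,\ldots,g_m$ and a central element $-1$ of order $2$ subject to $g_i^2=-1$ and $g_ig_j=-g_jg_i$ for $i\ne j$. Induced representation: write $\mathcal{H}_{2k-1}=\sum_{i=1}^{2k-1}x_iE_{i-1}$ with $E_0,\ldots,E_{2k-2}\in M_{2^{k-1}}(\mathbb{C})$ (these are unitary with $E_i^HE_j+E_j^HE_i=0$ for $i\ne j$), let $G_i=E_0^HE_i$ for $i=1,\ldots,2k-2$; the induced representation $\rho$ of $\mathcal{G}_{2k-2}$ is given by $\rho(g_i)=G_i$, $\rho(-1)=-I$.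 *)

(* Defs.v *)
From HB Require Import structures.
From mathcomp Require Import all_boot all_order all_algebra all_fingroup.
From mathcomp Require Import center mxrepresentation algC.
Set Implicit Arguments. Unset Strict Implicit. Unset Printing Implicit Defensive.
Import Order.TTheory GRing.Theory Num.Theory.
Local Open Scope ring_scope.

(* dimension of H_{2n+2} : dd n = 2^n (by construction dd n.+1 = dd n + dd n,
   so that block matrices need no casts). *)
Fixpoint dd (n : nat) : nat := if n is n'.+1 then (dd n' + dd n')%N else 1%N.

Definition ctr (m : nat) (A : 'M[algC]_m) : 'M[algC]_m := (map_mx (fun z : algC => z^*) A)^T.

(* Hd x n = H_{2(n+1)} evaluated at the (real) values x_1, x_2, ... given by
   x : nat -> algC  (x i is x_i; x 0 is unused).
   H_2 = (x_1 + x_2 i),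
   H_{2k} = [[H_{2k-2}, (x_{2k-1}+x_{2k} i) I], [-(x_{2k-1}-x_{2k} i) I, H_{2k-2}^H]].
   With k = n+2: x_{2k-1} = x (2n+3), x_{2k} = x (2n+4). *)
Fixpoint Hd (x : nat -> algC) (n : nat) : 'M[algC]_(dd n) :=
  match n return 'M[algC]_(dd n) with
  | 0 => (x 1%N + x 2%N * 'i)%:M
  | n'.+1 =>
      block_mx (Hd x n') ((x (2 * n' + 3)%N + x (2 * n' + 4)%N * 'i)%:M)
               (- (x (2 * n' + 3)%N - x (2 * n' + 4)%N * 'i)%:M) (ctr (Hd x n'))
  end.

Definition unitpt (i : nat) : nat -> algC := fun j => if j == i then 1 else 0.

(* H_{2k-1} (k = n+1) is H_{2k} with x_{2k} = 0; it is linear in the x's, so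
   its coefficient matrix E_{i-1} of x_i (1 <= i <= 2k-1 = 2n+1) is its value
   at the point e_i (which has x_{2k} = 0). *)
Definition Ecoef (n : nat) (j : nat) : 'M[algC]_(dd n) := Hd (unitpt j.+1) n.

(* G_i = E_0^H E_i, i = 1 .. 2k-2 = 2n ; indexed by i : 'I_(2n), G_(i+1). *)
Definition Gmat (n : nat) (i : 'I_(2 * n)) : 'M[algC]_(dd n) :=
  ctr (Ecoef n 0) *m Ecoef n (i.+1).

(* Main.v *)
Require Import Defs.
From HB Require Import structures.
From mathcomp Require Import all_boot all_order all_algebra all_fingroup.
From mathcomp Require Import center mxrepresentation algC classfun zify.
Import Order.TTheory GRing.Theory Num.Theory.
Local Open Scope ring_scope.

Lemma irr_of_cent (gT : finGroupType) (G : {group gT}) m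
   (rG : mx_representation algC G m) : (0 < m)%N ->
  (forall A : 'M[algC]_m, (forall x, x \in G -> A *m rG x = rG x *m A) -> exists c, A = c%:M) ->
  mx_irreducible rG.
Proof.
move=> m0 cent; apply/mx_irrP; split => // U modU nzU.
have [W modW defUW dx] := mx_Maschke_pchar rG (algC'G_pchar G) modU (submx1 U).
have dxUW : (U :&: W = 0)%MS by apply/mxdirect_addsP.
have hom := proj_mx_hom dxUW modU modW.
have [c Pc] : exists c, proj_mx U W = c%:M.
  apply: cent => x Gx.
  have s1 : (1%:M <= U + W)%MS by rewrite defUW.
  move/hom_mxP: (submx_trans s1 hom) => /(_ x Gx).
  by rewrite !mul1mx.
have UP := proj_mx_id dxUW (submx_refl U).
have c1 : c = 1.
  move: UP; rewrite Pc mul_mx_scalar => /eqP; rewrite -subr_eq0 -{2}[U]scale1r -scalerBl.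
  by rewrite scaler_eq0 (negPf nzU) orbF subr_eq0 => /eqP.
have W0 : W = 0.
  have := proj_mx_0 dxUW (submx_refl W); rewrite Pc c1 mulmx1 => ->; done.
have s1 : (1%:M <= U + W)%MS by rewrite defUW.
by rewrite -sub1mx; move: s1; rewrite W0 addsmx0.
Qed.
Definition E m j := Hd (unitpt j) m.

Lemma ctr_block m (A B C D : 'M[algC]_m) :
  ctr (block_mx A B C D : 'M_(m+m)) = block_mx (ctr A) (ctr C) (ctr B) (ctr D).
Proof. by rewrite /ctr map_block_mx tr_block_mx. Qed.

Lemma ctrN m (A : 'M[algC]_m) : ctr (- A) = - ctr A.
Proof. by apply/matrixP => i j; rewrite !mxE rmorphN. Qed.

Lemma ctr0 m : ctr (0 : 'M[algC]_m) = 0.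
Proof. by apply/matrixP => i j; rewrite !mxE rmorph0. Qed.

Lemma ctr_scalar m (c : algC) : ctr (c%:M : 'M_m) = (c^*)%:M.
Proof. by apply/matrixP => i j; rewrite !mxE eq_sym; case: (_ == _); rewrite ?rmorph0 ?rmorph1 /= ?mulr1n ?mulr0n ?rmorph0. Qed.

Lemma Hd0 x m : (forall j, (0 < j <= 2 * m+2)%N -> x j = 0) -> Hd x m = 0.
Proof.
elim: m => [|m IH] hx /=.
  by rewrite !hx // mul0r addr0 raddf0.
rewrite IH; last by move=> j hj; apply: hx; lia.
rewrite !hx; try lia.
by rewrite mul0r addr0 subr0 raddf0 oppr0 ctr0 block_mx0.
Qed.

Lemma E_low m j : (2 <= j <= 2 * m+2)%N ->
  E m.+1 j = block_mx (E m j) 0 0 (ctr (E m j)).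
Proof.
move=> hj; rewrite /E /= /unitpt.
have -> : (2 * m + 3 == j)%N = false by apply/eqP; lia.
have -> : (2 * m + 4 == j)%N = false by apply/eqP; lia.
by rewrite mul0r addr0 subr0 raddf0 oppr0.
Qed.

Lemma E_J m : E m.+1 (2 * m+3) = block_mx 0 1%:M (- 1%:M) 0.
Proof.
rewrite /E /= Hd0 ?ctr0; last by move=> j hj; rewrite /unitpt; case: eqP => //; lia.
rewrite /unitpt eqxx.
have -> : (2 * m + 4 == 2 * m + 3)%N = false by apply/eqP; lia.
by rewrite mul0r addr0 subr0.
Qed.

Lemma E_K m : E m.+1 (2 * m+4) = block_mx 0 ('i%:M) ('i%:M) 0.
Proof.
rewrite /E /= Hd0 ?ctr0; last by move=> j hj; rewrite /unitpt; case: eqP => //; lia.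
rewrite /unitpt eqxx.
have -> : (2 * m + 3 == 2 * m + 4)%N = false by apply/eqP; lia.
rewrite mul1r add0r sub0r. congr block_mx. by rewrite raddfN opprK.
Qed.

Lemma E1 m : E m 1 = 1%:M.
Proof.
elim: m => [|m IH]; first by rewrite /E /= /unitpt /= mul0r addr0.
rewrite /E /= -/(E m 1) IH /unitpt.
have -> : (2 * m + 3 == 1)%N = false by apply/eqP; lia.
have -> : (2 * m + 4 == 1)%N = false by apply/eqP; lia.
by rewrite mul0r addr0 subr0 raddf0 oppr0 ctr_scalar conjC1 -scalar_mx_block.
Qed.

Lemma rng m j : (2 <= j <= 2 * m.+1 + 2)%N ->
  [\/ (2 <= j <= 2 * m + 2)%N, j = (2 * m + 3)%N | j = (2 * m + 4)%N].
Proof.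
move=> h; have [h1|h1] := leqP j (2 * m + 2); first by constructor 1; lia.
have [h2|h2] := leqP j (2 * m + 3); first by constructor 2; lia.
by constructor 3; lia.
Qed.

Lemma mI m : - 1%:M = block_mx (- 1%:M) 0 0 (- 1%:M) :> 'M[algC]_(dd m.+1).
Proof. by rewrite [in LHS](scalar_mx_block (dd m) (dd m)) opp_block_mx oppr0. Qed.

Lemma Einv m :
  (forall j, (2 <= j <= 2 * m + 2)%N -> ctr (E m j) = - E m j /\ E m j *m E m j = - 1%:M) /\
  (forall j k, (2 <= j <= 2 * m + 2)%N -> (2 <= k <= 2 * m + 2)%N -> j != k ->
     E m j *m E m k = - (E m k *m E m j)).
Proof.
elim: m => [|m [IH1 IH2]].
  have E02 : E 0 2 = 'i%:M by rewrite /E /= /unitpt /= mul1r add0r.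
  split.
    move=> j hj; have -> : j = 2%N by lia.
    by rewrite E02 ctr_scalar conjCi raddfN -scalar_mxM mulCii raddfN.
  move=> j k hj hk; have -> : j = k by lia.
  by rewrite eqxx.
have low j : (2 <= j <= 2 * m + 2)%N -> E m.+1 j = block_mx (E m j) 0 0 (- E m j).
  by move=> hj; rewrite E_low // (proj1 (IH1 j hj)).
split.
  move=> j /rng [hj|->|->].
  - have [c s] := IH1 j hj.
    rewrite low // ctr_block ctr0 c ctrN c mulmx_block mI.
    by rewrite !mulmx0 !mul0mx !addr0 !add0r mulNmx mulmxN opprK s opp_block_mx !opprK oppr0.
  - rewrite E_J; split.
      rewrite ctr_block ctr0 ctrN ctr_scalar conjC1 opp_block_mx oppr0. by rewrite opprK.
    rewrite mulmx_block mI.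
    by rewrite !mulmx0 !mul0mx !addr0 !add0r mulmxN mul1mx mulNmx mulmx1.
  - rewrite E_K; split.
      by rewrite ctr_block ctr0 ctr_scalar conjCi opp_block_mx oppr0 raddfN.
    rewrite mulmx_block mI.
    by rewrite !mulmx0 !mul0mx !addr0 !add0r -scalar_mxM mulCii raddfN.
move=> j k /rng [hj|->|->] /rng [hk|->|->] jk;
  rewrite ?E_J ?E_K; try rewrite (low j hj); try rewrite (low k hk);
  rewrite !mulmx_block !opp_block_mx;
  rewrite ?mulmx0 ?mul0mx ?addr0 ?add0r ?mulmxN ?mulNmx ?mulmx1 ?mul1mx ?opprK ?oppr0.
all: try by rewrite (IH2 j k).
all: try by rewrite eqxx in jk.
all: try by rewrite ?scalar_mxC.
Qed.

Lemma E_low' m j : (2 <= j <= 2 * m + 2)%N ->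
  E m.+1 j = block_mx (E m j) 0 0 (- E m j).
Proof. by move=> hj; rewrite E_low // (proj1 ((proj1 (Einv m)) j hj)). Qed.

Lemma blk_split m (M : 'M[algC]_(dd m.+1)) :
  exists A B C D, M = block_mx A B C D :> 'M_(dd m + dd m).
Proof. by exists (ulsubmx (M : 'M_(dd m + dd m))), (ursubmx (M : 'M_(dd m + dd m))),
  (dlsubmx (M : 'M_(dd m + dd m))), (drsubmx (M : 'M_(dd m + dd m))); rewrite submxK. Qed.

Lemma anti_i n (B : 'M[algC]_n) : B *m 'i%:M = - ('i%:M *m B) -> B = 0.
Proof.
rewrite scalar_mxC !mul_scalar_mx => /eqP; rewrite -subr_eq0 opprK -scalerDl.
rewrite scaler_eq0 => /orP [|/eqP //].
by rewrite -mulr2n mulrn_eq0 /= (negPf (neq0Ci _)).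
Qed.

Lemma Eanti m (M : 'M[algC]_(dd m)) :
  (forall j, (2 <= j <= 2 * m + 2)%N -> M *m E m j = - (E m j *m M)) -> M = 0.
Proof.
elim: m M => [|m IH] M h.
  apply: anti_i; have := h 2%N isT; by rewrite /E /= /unitpt /= mul1r add0r.
have [A [B [C [D eM]]]] := blk_split m M; rewrite eM in h *.
have := h (2 * m + 3)%N ltac:(lia); rewrite E_J !mulmx_block opp_block_mx.
move/eq_block_mx; rewrite !mulmx0 !mul0mx !addr0 !add0r !mulmxN !mulNmx !mulmx1 !mul1mx !opprK.
move=> [eBC eAD _ _].
have := h (2 * m + 4)%N ltac:(lia); rewrite E_K !mulmx_block opp_block_mx.
move/eq_block_mx; rewrite !mulmx0 !mul0mx !addr0 !add0r.
move=> [eB _ _ _].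
have B0 : B = 0.
  by apply: anti_i; rewrite eB (oppr_inj eBC).
have C0 : C = 0 by rewrite -B0; apply: oppr_inj.
have A0 : A = 0.
  apply: IH => j hj.
  have := h j ltac:(lia); rewrite (@E_low' m j ltac:(lia)) !mulmx_block opp_block_mx.
  by move/eq_block_mx => [+ _ _ _]; rewrite !mulmx0 !mul0mx !addr0.
by rewrite B0 C0 A0 -(opprK D) -eAD A0 oppr0 block_mx0.
Qed.

Lemma Ecomm m (M : 'M[algC]_(dd m)) :
  (forall j, (2 <= j <= 2 * m + 1)%N -> M *m E m j = E m j *m M) -> exists c, M = c%:M.
Proof.
elim: m M => [|m IH] M h; first by exists (M 0 0); apply: mx11_scalar.
have [A [B [C [D eM]]]] := blk_split m M; rewrite eM in h *.
have := h (2 * m + 3)%N ltac:(lia); rewrite E_J !mulmx_block.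
move/eq_block_mx; rewrite !mulmx0 !mul0mx !addr0 !add0r !mulmxN !mulNmx !mulmx1 !mul1mx.
move=> [eBC eAD _ _].
have B0 : B = 0.
  apply: Eanti => j hj.
  have := h j ltac:(lia); rewrite (@E_low' m j ltac:(lia)) !mulmx_block.
  move/eq_block_mx => [_ + _ _]; rewrite mulmx0 mul0mx add0r addr0 mulmxN => <-; by rewrite opprK.
have [c Ac] : exists c, A = c%:M.
  apply: IH => j hj.
  have := h j ltac:(lia); rewrite (@E_low' m j ltac:(lia)) !mulmx_block.
  by move/eq_block_mx => [+ _ _ _]; rewrite !mulmx0 !mul0mx !addr0.
exists c; rewrite (scalar_mx_block (dd m) (dd m)).
by rewrite -eAD Ac -eBC B0 oppr0.
Qed.

Section NF.
Variables (T : Type) (mul : T -> T -> T) (one zz : T) (m : nat) (gg : 'I_m -> T).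
Hypothesis mulA : forall x y w, mul x (mul y w) = mul (mul x y) w.
Hypothesis mul1 : forall x, mul one x = x.
Hypothesis zzC : forall i, mul zz (gg i) = mul (gg i) zz.
Hypothesis zz2 : mul zz zz = one.
Hypothesis gg2 : forall i, mul (gg i) (gg i) = zz.
Hypothesis ggC : forall i j, i != j -> mul (gg i) (gg j) = mul zz (mul (gg j) (gg i)).

Definition sgn (b : bool) x := if b then mul zz x else x.
Definition P (s : seq 'I_m) (S : {set 'I_m}) :=
  foldr (fun j acc => if j \in S then mul (gg j) acc else acc) one s.
Fixpoint kk (s : seq 'I_m) i (S : {set 'I_m}) : bool :=
  if s is x :: s' then (if x == i then i \in S else (x \in S) (+) kk s' i S) else false.
Definition flip (S : {set 'I_m}) i := if i \in S then S :\ i else i |: S.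

Lemma flip_neq S i j : j != i -> (j \in flip S i) = (j \in S).
Proof. by move=> ji; rewrite /flip; case: (i \in S); rewrite !inE (negPf ji). Qed.
Lemma flip_eq S i : (i \in flip S i) = ~~ (i \in S).
Proof. by rewrite /flip; case: (boolP (i \in S)) => h; rewrite !inE eqxx // h. Qed.

Lemma P_notin s S i : i \notin s -> P s (flip S i) = P s S.
Proof.
elim: s => [//|x s IH]; rewrite inE negb_or => /andP [ix ins] /=.
by rewrite flip_neq 1?eq_sym // IH.
Qed.

Lemma sgn_gg b i Y : mul (gg i) (sgn b Y) = sgn b (mul (gg i) Y).
Proof. by case: b => //=; rewrite !mulA zzC. Qed.

Lemma sgn_sgn a b Y : sgn a (sgn b Y) = sgn (a (+) b) Y.
Proof. by case: a; case: b => //=; rewrite mulA zz2 mul1. Qed.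

Lemma P_gg s S i : uniq s -> i \in s ->
  mul (gg i) (P s S) = sgn (kk s i S) (P s (flip S i)).
Proof.
elim: s => [//|x s IH] /= /andP [xs us]; rewrite inE.
case: (eqVneq x i) => [<- _ | xi /= ins].
  rewrite /P /= -/(P s S) -/(P s (flip S x)) P_notin // flip_eq.
  by case: (x \in S) => /=; rewrite ?mulA ?gg2.
rewrite /P /= -/(P s S) -/(P s (flip S i)) flip_neq //.
case: (x \in S) => /=.
  rewrite mulA ggC 1?eq_sym // -!mulA IH // sgn_gg.
  by rewrite -[mul zz _]/(sgn true _) sgn_sgn.
by rewrite IH.
Qed.

Definition f (p : bool * {set 'I_m}) := sgn p.1 (P (enum 'I_m) p.2).
Definition gen (o : option 'I_m) := if o is Some i then gg i else zz.
Definition act (o : option 'I_m) (p : bool * {set 'I_m}) :=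
  if o is Some i then (p.1 (+) kk (enum 'I_m) i p.2, flip p.2 i) else (~~ p.1, p.2).

Lemma f_act o p : mul (gen o) (f p) = f (act o p).
Proof.
case: o p => [i|] [a S] /=; rewrite /f /=.
  by rewrite sgn_gg P_gg ?enum_uniq ?mem_enum // sgn_sgn.
by rewrite -[mul zz _]/(sgn true _) sgn_sgn.
Qed.

Lemma f0 : f (false, set0) = one.
Proof. rewrite /f /=; elim: (enum 'I_m) => //= x s ->; by rewrite inE. Qed.

End NF.

Theorem lemma6 (n : nat) (gT : finGroupType) (G : {group gT})
    (z : gT) (g : 'I_(2 * n) -> gT) :
  G :=: <<(z |: [set g i | i : 'I_(2 * n)])>>%g ->
  #|G| = (2 ^ (2 * n).+1)%N ->
  #[z]%g = 2%N ->
  (z \in 'Z(G))%g ->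
  (forall i, (g i ^+ 2)%g = z) ->
  (forall i j, i != j -> (g i * g j)%g = (z * (g j * g i))%g) ->
  dd n = (2 ^ n)%N /\
  exists rG : mx_representation algC G (dd n),
    [/\ forall i, rG (g i) = Gmat i,
        rG z = - 1%:M
      & mx_irreducible rG].
Proof.
move=> defG cardG oz zZ g2 gC.
have ddE : forall k, dd k = (2 ^ k)%N by elim=> //= k ->; rewrite expnS mul2n addnn.
split; first exact: ddE.
have zG : z \in G by rewrite defG mem_gen // setU11.
have gG i : g i \in G by rewrite defG mem_gen // setU1r // imset_f.
have zC i : (z * g i = g i * z)%g by case/centerP: zZ => _ /(_ _ (gG i)).
have zz2 : (z * z = 1)%g by have := expg_order z; rewrite oz expgS expg1.
have gg2 i : (g i * g i = z)%g by rewrite -(g2 i) expgS expg1.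
pose fG := f gT mulg 1%g z (2 * n) g.
have faG o p : (gen gT z (2 * n) g o * fG p)%g = fG (act _ o p) := @f_act gT mulg 1%g z (2 * n) g mulgA mul1g zC zz2 gg2 gC o p.
have GE (i : 'I_(2 * n)) : Gmat i = E n i.+2.
  rewrite /Gmat /Ecoef; change (ctr (E n 1) *m E n i.+2 = E n i.+2).
  by rewrite E1 ctr_scalar conjC1 mul1mx.
have [EI1 EI2] := Einv n.
have M2 (i : 'I_(2 * n)) : Gmat i *m Gmat i = - 1%:M.
  by rewrite GE; apply: (proj2 (EI1 _ _)); case: i => i /= hi; lia.
have MC (i j : 'I_(2 * n)) : i != j -> Gmat i *m Gmat j = - 1%:M *m (Gmat j *m Gmat i).
  move=> ij; rewrite mulNmx mul1mx !GE; apply: EI2.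
  - by case: i {ij} => i /= hi; lia.
  - by case: j {ij} => j /= hj; lia.
  - by apply: contra ij => /eqP [] /val_inj ->.
have MzC (i : 'I_(2 * n)) : - 1%:M *m Gmat i = Gmat i *m - 1%:M.
  by rewrite mulNmx mulmxN mul1mx mulmx1.
have Mz2 : - 1%:M *m - 1%:M = 1%:M :> 'M[algC]_(dd n) by rewrite mulNmx mulmxN opprK mul1mx.
pose fM := f 'M[algC]_(dd n) mulmx 1%:M (- 1%:M) (2 * n) (@Gmat n).
have faM o p : gen _ (- 1%:M) (2 * n) (@Gmat n) o *m fM p = fM (act _ o p) := @f_act _ mulmx 1%:M (- 1%:M) (2 * n) (@Gmat n) (@mulmxA _ _ _ _ _) (@mul1mx _ _ _) MzC Mz2 M2 MC o p.
have fGin p : fG p \in G.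
  rewrite /fG /f /sgn; case: p => a S /=.
  have : P gT mulg 1%g (2 * n) g (enum 'I_(2 * n)) S \in G.
    rewrite /P; elim: (enum _) => [|x s IH] /=; first exact: group1.
    by case: ifP => // _; rewrite groupM.
  by case: a => // h; rewrite groupM.
have fG0 : fG (false, set0) = 1%g by exact: f0.
have fM0 : fM (false, set0) = 1%:M by exact: f0.
have surj x : x \in G -> exists p, fG p = x.
  rewrite defG => /gen_prodgP [N [c hc ->]].
  elim: N c hc => [|N IH] c hc; first by exists (false, set0); rewrite big_ord0.
  rewrite big_ord_recl.
  have [p hp] := IH (fun k => c (lift ord0 k)) (fun k => hc _).
  rewrite -hp.
  case/setU1P: (hc ord0) => [-> | /imsetP [i _ ->]].
    by exists (act _ None p); rewrite -faG.
  by exists (act _ (Some i) p); rewrite -faG.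
have cardD : #|{: bool * {set 'I_(2 * n)}}| = (2 ^ (2 * n).+1)%N.
  by rewrite card_prod card_bool -cardsT -powersetT card_powerset cardsT card_ord expnS.
have hinj : #|codom fG| == #|{: bool * {set 'I_(2 * n)}}|.
  rewrite eqn_leq leq_image_card /= cardD -cardG.
  apply: subset_leq_card; apply/subsetP => x /surj [p <-]; exact: codom_f.
have inj p q : fG p = fG q -> p = q by move/image_injP: hinj => /(_ p q isT isT).
pose pinv x := odflt (false, set0) [pick p | fG p == x].
have pinvK p : pinv (fG p) = p.
  rewrite /pinv; case: pickP => [q /eqP /inj -> //| /(_ p)]; by rewrite eqxx.
have fGK x : x \in G -> fG (pinv x) = x by move=> /surj [p <-]; rewrite pinvK.
pose r x := fM (pinv x).
have Phi x : x \in G -> forall p, r (x * fG p)%g = r x *m fM p.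
  rewrite defG => /gen_prodgP [N [c hc ->]].
  elim: N c hc => [|N IH] c hc p.
    by rewrite big_ord0 mul1g /r pinvK -fG0 pinvK fM0 mul1mx.
  rewrite big_ord_recl.
  set y := (\prod_(i < N) _)%g.
  have IH' := IH _ (fun k => hc (lift ord0 k)).
  have yG : y \in G.
    by rewrite defG; apply/gen_prodgP; exists N, (fun k => c (lift ord0 k)).
  have [o ->] : exists o, c ord0 = gen gT z (2 * n) g o.
    by case/setU1P: (hc ord0) => [-> | /imsetP [i _ ->]]; [exists None | exists (Some i)].
  have key q : r (gen gT z (2 * n) g o * y * fG q)%g
      = gen _ (- 1%:M) (2 * n) (@Gmat n) o *m (r y *m fM q).
    rewrite -mulgA -(fGK (y * fG q)%g) ?groupM // faG /r pinvK -faM.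
    by rewrite -/(r _) IH'.
  by rewrite key -[(_ * y)%g]mulg1 -fG0 key fM0 mulmx1 mulmxA.
have rM : mx_repr G r.
  split; first by rewrite /r -fG0 pinvK fM0.
  by move=> x y xG yG; rewrite -{1}(fGK y yG) (Phi x xG).
have rg o : r (gen gT z (2 * n) g o) = gen _ (- 1%:M) (2 * n) (@Gmat n) o.
  by rewrite /r -[gen _ _ _ _ _]mulg1 -fG0 faG pinvK -faM fM0 mulmx1.
exists (MxRepresentation rM); split => /=.
- by move=> i; exact: (rg (Some i)).
- exact: (rg None).
apply: irr_of_cent; first by rewrite ddE expn_gt0.
move=> A h; apply: Ecomm => j hj.
have hi : (j - 2 < 2 * n)%N by lia.
have := h _ (gG (Ordinal hi)); rewrite /= (rg (Some _)) /= => e.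
have e2 := GE (Ordinal hi); rewrite /= in e2.
have ej : j = (j - 2).+2 by lia.
rewrite ej -e2; exact: e.
Qed.
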